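(* Fix $A>0$. For integers $n\ge 3$ with $(n-2)\pi>A$, let $\mathcal{Q}_n$ be the regular $n$-gon in $\mathbb{H}^2$ of area $A$. Then the perimeter $P(\mathcal{Q}_n)$ is strictly decreasing in $n$; that is, $P(\mathcal{Q}_{n+1})<P(\mathcal{Q}_n)$ whenever both polygons exist. *)

(* Defs.v *)
From Stdlib Require Import Reals.
Open Scope R_scope.

Definition arcosh (y : R) : R := ln (y + sqrt (y * y - 1)).

(* The regular n-gon Q_n of area A in the hyperbolic plane H^2
   (curvature -1).
   Its interior angle alpha is fixed by Gauss-Bonnet:
     A = (n-2) pi - n alpha. *)
Definition reg_angle (n : nat) (A : R) : R := ((INR n - 2) * PI - A) / INR n.

(* Side length s of Q_n: in the right triangle (center, side midpoint,
   vertex) with angles pi/n at the center and alpha/2 at the vertex,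
   hyperbolic trigonometry gives cos(pi/n) = cosh(s/2) sin(alpha/2). *)
Definition reg_side (n : nat) (A : R) : R :=
  2 * arcosh (cos (PI / INR n) / sin (reg_angle n A / 2)).

Definition reg_perimeter (n : nat) (A : R) : R := INR n * reg_side n A.

(* Main.v *)
Require Import Defs.
From Coquelicot Require Import Coquelicot.
From Stdlib Require Import Reals Lra Lia.
Open Scope R_scope.

Definition S2 x := cos x ^2 + sin x ^2.
Definition F c p t := ln (cos (p*t)) - ln (cos (c*t)).
Definition K c p t := c * sin (c*t) / cos (c*t) - p * sin (p*t) / cos (p*t).
Definition K1 c p t := c^2 * S2 (c*t) / cos (c*t) ^2 - p^2 * S2 (p*t) / cos (p*t) ^2.
Definition K2 c p t := 2*c^3 * S2 (c*t) * sin (c*t) / cos (c*t) ^3 - 2*p^3 * S2 (p*t) * sin (p*t) / cos (p*t) ^3.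
Definition J c p t := t * K1 c p t - K c p t.
Definition H c p t := t * K c p t - 2 * F c p t.
Definition G c p t := F c p t / t^2.

Ltac nz := repeat split; try (intro; nra); try lra; try (apply pow_nonzero; lra).

Section D.
Variables c p t : R.
Hypothesis hc : 0 < cos (c*t).
Hypothesis hp : 0 < cos (p*t).

Lemma dJ : is_derive (J c p) t (t * K2 c p t).
Proof. unfold J, K1, K, K2, S2. auto_derive; [nz | field; lra]. Qed.
Lemma dH : is_derive (H c p) t (J c p t).
Proof. unfold H, J, K1, K, F, S2. auto_derive; [nz | field]. all: try lra. Qed.
Lemma dG : t <> 0 -> is_derive (G c p) t (H c p t / t^3).
Proof. intro. unfold G, H, K, F. auto_derive; [nz | field; lra]. Qed.
End D.

Lemma incr (f f' : R -> R) a b : a < b ->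
  (forall x, a <= x <= b -> is_derive f x (f' x)) ->
  (forall x, a < x < b -> 0 < f' x) -> f a < f b.
Proof.
intros ab D P.
destruct (MVT_cor2 f f' a b ab) as [x [E Hx]].
- intros x Hx; apply is_derive_Reals; auto.
- specialize (P x Hx). nra.
Qed.

Section A.
Variables c p T : R.
Hypothesis hp : 0 < p.
Hypothesis hpc : p < c.
Hypothesis hT : c * T < PI / 2.

Lemma cospos x : 0 <= x <= T -> 0 < cos (c*x) /\ 0 < cos (p*x).
Proof.
intros [h1 h2]. pose proof PI_RGT_0.
assert (c*x <= c*T) by nra. assert (p*x <= c*x) by nra.
split; apply cos_gt_0; nra.
Qed.

Lemma K2pos x : 0 < x <= T -> 0 < K2 c p x.
Proof.
intros [h1 h2]. pose proof PI_RGT_0.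
assert (c*x <= c*T) by nra. assert (p*x < c*x) by nra.
assert (0 < p*x) by nra.
set (a := c*x) in *. set (b := p*x) in *.
assert (hsa: S2 a = 1) by (unfold S2; pose proof (sin2_cos2 a); unfold Rsqr in *; lra).
assert (hsb: S2 b = 1) by (unfold S2; pose proof (sin2_cos2 b); unfold Rsqr in *; lra).
unfold K2; fold a b; rewrite hsa, hsb.
assert (ca : 0 < cos a) by (apply cos_gt_0; lra).
assert (cab : cos a < cos b) by (apply cos_decreasing_1; lra).
assert (sb : 0 < sin b) by (apply sin_gt_0; lra).
assert (sab : 0 < sin (a - b)) by (apply sin_gt_0; lra).
rewrite sin_minus in sab.
assert (e1: sin b * cos a * cos a ^2 < sin a * cos b * cos b ^2).
{ apply Rmult_le_0_lt_compat; try nra. }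
assert (e2: p^3 * (sin b * cos a * cos a ^2) < c^3 * (sin a * cos b * cos b ^2)).
{ assert (p*p < c*c) by nra. assert (p*(p*p) < c*(c*c)) by nra. assert (p^3 < c^3) by (simpl; rewrite !Rmult_1_r; lra). assert (0 < p^3) by (apply pow_lt; lra). assert (0 < sin b * cos a * cos a ^2) by (apply Rmult_lt_0_compat; [nra| apply pow_lt; lra]). apply Rmult_le_0_lt_compat. all: try nra. }
assert (0 < cos a ^3) by (apply pow_lt; lra).
assert (0 < cos b ^3) by (apply pow_lt; lra).
apply Rlt_0_minus.
apply (Rmult_lt_reg_r (cos a ^3 * cos b ^3)); [nra|].
field_simplify; try lra.
Qed.

Lemma Jpos t : 0 < t <= T -> 0 < J c p t.
Proof.
intros [h1 h2].
replace 0 with (J c p 0) at 1.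
2:{ unfold J, K1, K. rewrite !Rmult_0_r, sin_0, cos_0. field. }
apply (incr _ (fun x => x * K2 c p x)); auto.
- intros x hx. destruct (cospos x) as [u v]; try lra. apply dJ; auto.
- intros x hx. apply Rmult_lt_0_compat; try lra. apply K2pos; lra.
Qed.

Lemma Hpos t : 0 < t <= T -> 0 < H c p t.
Proof.
intros [h1 h2].
replace 0 with (H c p 0) at 1.
2:{ unfold H, F, K. rewrite !Rmult_0_r, sin_0, cos_0, ln_1. field. }
apply (incr _ (J c p)); auto.
- intros x hx. destruct (cospos x) as [u v]; try lra. apply dH; auto.
- intros x hx. apply Jpos; lra.
Qed.

Lemma Gincr t1 t2 : 0 < t1 < t2 -> t2 <= T -> G c p t1 < G c p t2.
Proof.
intros h1 h2.
apply (incr _ (fun x => H c p x / x^3)); try lra.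
- intros x hx. destruct (cospos x) as [u v]; try lra. apply dG; auto; lra.
- intros x hx. apply Rdiv_lt_0_compat. apply Hpos; lra. apply pow_lt; lra.
Qed.
End A.

Definition ch w := (exp w + exp (-w)) / 2.
Definition sh w := (exp w - exp (-w)) / 2.
Definition Q w := sh w * ch w - w * (ch w ^2 - sh w ^2).
Definition N w := 2 * ln (ch w) - w * sh w / ch w.
Definition M w := - (ln (ch w) / w^2).

Lemma chpos w : 0 < ch w.
Proof. unfold ch. pose proof (exp_pos w). pose proof (exp_pos (-w)). lra. Qed.
Lemma shpos w : 0 < w -> 0 < sh w.
Proof. intro. unfold sh. assert (exp (-w) < exp w) by (apply exp_increasing; lra). lra. Qed.
Lemma chsh w : ch w ^2 - sh w ^2 = 1.
Proof. unfold ch, sh. assert (exp w * exp (-w) = 1) by (rewrite <- exp_plus; replace (w + -w) with 0 by ring; apply exp_0). nra. Qed.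

Lemma dQ w : is_derive Q w (2 * sh w ^2).
Proof. unfold Q, sh, ch. auto_derive; [nz | field]. Qed.
Lemma dN w : is_derive N w (Q w / ch w ^2).
Proof. pose proof (chpos w). unfold N, Q. unfold ch in *. unfold sh. auto_derive; [nz | field; lra]. Qed.
Lemma dM w : w <> 0 -> is_derive M w (N w / w^3).
Proof. intro. pose proof (chpos w). unfold N, M. unfold ch in *. unfold sh. auto_derive. { repeat split; try lra. rewrite Rmult_1_r; apply Rmult_integral_contrapositive_currified; auto. } unfold Rdiv. field. repeat split; try lra; auto. Qed.

Lemma Qpos w : 0 < w -> 0 < Q w.
Proof. intro. replace 0 with (Q 0) at 1.
2:{ unfold Q, sh, ch. rewrite Ropp_0, exp_0. field. }
apply (incr _ (fun x => 2 * sh x ^2)); auto.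
- intros; apply dQ.
- intros x hx. pose proof (shpos x). nra.
Qed.
Lemma Npos w : 0 < w -> 0 < N w.
Proof. intro. replace 0 with (N 0) at 1.
2:{ unfold N, sh, ch. rewrite Ropp_0, exp_0. replace ((1+1)/2) with 1 by field. rewrite ln_1. field. }
apply (incr _ (fun x => Q x / ch x ^2)); auto.
- intros; apply dN.
- intros x hx. apply Rdiv_lt_0_compat. apply Qpos; lra. apply pow_lt, chpos.
Qed.
Lemma Mincr w1 w2 : 0 < w1 < w2 -> M w1 < M w2.
Proof. intros. apply (incr _ (fun x => N x / x^3)); try lra.
- intros; apply dM; lra.
- intros x hx. apply Rdiv_lt_0_compat. apply Npos; lra. apply pow_lt; lra.
Qed.

Lemma chincr a b : 0 <= a < b -> ch a < ch b.
Proof. intros. apply (incr _ sh); try lra.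
- intros x _. unfold ch, sh. auto_derive; auto. field.
- intros x hx. apply shpos; lra.
Qed.

Lemma key c p t1 t2 u1 u2 : 0 < p < c -> 0 < t1 < t2 -> c * t2 < PI/2 ->
  0 < u1 -> 0 < u2 -> ln (ch u1) = F c p t1 -> ln (ch u2) = F c p t2 ->
  u1 * t2 < u2 * t1.
Proof.
intros hpc ht hT h1 h2 e1 e2.
assert (g := Gincr c p t2 ltac:(lra) ltac:(lra) hT t1 t2 ht ltac:(lra)).
unfold G in g. rewrite <- e1, <- e2 in g.
set (l := t1 / t2).
assert (hl : 0 < l < 1). { unfold l; split. apply Rdiv_lt_0_compat; lra.
  apply (Rmult_lt_reg_r t2); try lra. field_simplify; lra. }
assert (m := Mincr (l*u2) u2 ltac:(split; nra)). unfold M in m.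
destruct (Rlt_or_le u1 (l*u2)) as [hh|hh].
- unfold l in hh. apply (Rmult_lt_compat_r t2) in hh; try lra.
  replace (t1 / t2 * u2 * t2) with (u2 * t1) in hh by (field; lra). lra.
- exfalso.
  assert (q1: ln (ch (l*u2)) <= ln (ch u1)).
  { destruct hh as [hh|hh]. 2: rewrite hh; lra.
    left. apply ln_increasing. apply chpos. apply chincr. split; nra. }
  assert (q2: ln (ch u2) / u2^2 < ln (ch (l*u2)) / (l*u2)^2) by lra.
  assert (0 < u2^2) by (apply pow_lt; lra).
  assert (0 < l^2) by (apply pow_lt; lra).
  assert (q3: l^2 * ln (ch u2) < ln (ch (l*u2))).
  { apply (Rmult_lt_compat_r ((l*u2)^2)) in q2; [|apply pow_lt; nra].
    replace (ln (ch (l * u2)) / (l * u2) ^ 2 * (l * u2) ^ 2) with (ln (ch (l*u2))) in q2 by (field; nra).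
    replace (ln (ch u2) / u2 ^ 2 * (l * u2) ^ 2) with (l^2 * ln (ch u2)) in q2 by (field; nra). lra. }
  assert (0 < t1^2) by (apply pow_lt; lra).
  assert (q5: ln (ch u1) < t1^2 * (ln (ch u2) / t2^2)).
  { apply (Rmult_lt_compat_l (t1^2)) in g; auto.
    replace (t1 ^ 2 * (ln (ch u1) / t1 ^ 2)) with (ln (ch u1)) in g by (field; lra). lra. }
  replace (t1 ^ 2 * (ln (ch u2) / t2 ^ 2)) with (l^2 * ln (ch u2)) in q5 by (unfold l; field; lra).
  lra.
Qed.

Lemma arcosh_spec y : 1 < y -> 0 < arcosh y /\ ch (arcosh y) = y.
Proof.
intro hy. unfold arcosh.
set (s := sqrt (y*y - 1)).
assert (hs : 0 <= s) by apply sqrt_pos.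
assert (hs2 : s * s = y*y - 1) by (apply sqrt_sqrt; nra).
split.
- rewrite <- ln_1. apply ln_increasing; lra.
- unfold ch. rewrite exp_Ropp, exp_ln by lra.
  field_simplify; [|lra]. 
  replace (y ^ 2) with (y*y) by ring. replace (s^2) with (s*s) by ring.
  rewrite hs2. field. lra.
Qed.

Lemma side_eq (n : nat) (A : R) : (1 <= n)%nat ->
  reg_side n A = 2 * arcosh (cos (PI * (1 / INR n)) / cos ((PI + A/2) * (1 / INR n))).
Proof.
intro hn. assert (0 < INR n) by (apply lt_0_INR; lia).
unfold reg_side, reg_angle. f_equal. f_equal. f_equal.
- f_equal. field. lra.
- rewrite <- sin_shift. f_equal. field. lra.
Qed.

Theorem proposition3p5 (A : R) (n : nat) :
  0 < A -> (3 <= n)%nat -> (INR n - 2) * PI > A ->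
  reg_perimeter (S n) A < reg_perimeter n A.
Proof.
intros hA hn hT.
assert (hn3 : 3 <= INR n) by (replace 3 with (INR 3) by (simpl; ring); apply le_INR; lia).
pose proof PI_RGT_0 as hpi.
unfold reg_perimeter. rewrite !side_eq by lia.
rewrite S_INR.
set (c := PI + A/2). set (t1 := 1 / (INR n + 1)). set (t2 := 1 / INR n).
assert (ht : 0 < t1 < t2). { unfold t1, t2. split. apply Rdiv_lt_0_compat; lra.
  apply Rmult_lt_reg_r with (INR n * (INR n + 1)); [nra|]. field_simplify; lra. }
assert (hcT : c * t2 < PI / 2).
{ unfold c, t2. apply Rmult_lt_reg_r with (2 * INR n); [lra|]. field_simplify; lra. }
assert (hy : forall t, 0 < t <= t2 -> 1 < cos (PI * t) / cos (c * t)).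
{ intros t [h1 h2].
  assert (c * t <= c * t2) by (apply Rmult_le_compat_l; unfold c; lra).
  assert (PI * t < c * t) by (apply Rmult_lt_compat_r; unfold c; lra).
  assert (0 < PI * t) by nra.
  assert (0 < cos (c*t)) by (apply cos_gt_0; lra).
  assert (cos (c*t) < cos (PI*t)) by (apply cos_decreasing_1; lra).
  apply (Rmult_lt_reg_r (cos (c*t))); auto. field_simplify; lra. }
destruct (arcosh_spec _ (hy t1 ltac:(lra))) as [p1 q1].
destruct (arcosh_spec _ (hy t2 ltac:(lra))) as [p2 q2].
assert (k := key c PI t1 t2 _ _ ltac:(unfold c; lra) ht hcT p1 p2).
assert (lnF : forall t, 0 < t <= t2 -> ln (cos (PI * t) / cos (c * t)) = F c PI t).
{ intros t ht'. pose proof (hy t ht').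
  assert (c * t <= c * t2) by (apply Rmult_le_compat_l; unfold c; lra).
  assert (0 < PI * t) by nra.
  assert (0 < cos (c*t)) by (apply cos_gt_0; unfold c in *; nra).
  assert (0 < cos (PI*t)) by (apply (Rmult_lt_reg_r (/ cos (c*t))); [apply Rinv_0_lt_compat; lra| unfold Rdiv in *; lra]).
  unfold F, Rdiv. rewrite ln_mult, ln_Rinv; try lra. apply Rinv_0_lt_compat; lra. }
rewrite q1, q2 in k. specialize (k (lnF t1 ltac:(lra)) (lnF t2 ltac:(lra))).
unfold t1, t2 in k.
set (u1 := arcosh (cos (PI * (1 / (INR n + 1))) / cos (c * (1 / (INR n + 1))))) in *.
set (u2 := arcosh (cos (PI * (1 / INR n)) / cos (c * (1 / INR n)))) in *.
apply (Rmult_lt_compat_r (INR n * (INR n + 1))) in k; [|nra].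
replace (u1 * (1 / INR n) * (INR n * (INR n + 1))) with ((INR n + 1) * u1) in k by (field; lra).
replace (u2 * (1 / (INR n + 1)) * (INR n * (INR n + 1))) with (INR n * u2) in k by (field; lra).
change ((INR n + 1) * (2 * u1) < INR n * (2 * u2)); lra.
Qed.
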